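(* Let $\eta_w>0$, $\lambda\in[0,1]$, and let $\theta_1,\dots,\theta_T\in\Theta$ satisfy $\theta_{t+1}=\arg\min_{\theta\in\Theta}\{\eta_w\langle\tilde g_t,\theta-\theta_t\rangle+\frac12\|\theta-\theta_t\|_2^2\}$ with $\tilde g_t=\nabla\ell(\theta_t,z_t)$ for some samples $z_t\in\mathcal Z$. If $S$ is a $0.4\lambda$-dominant set at $\theta_t$ for some $t\in[T]$, then for any non-negative integer $\sigma'\le\min\{\lfloor\frac{0.1\lambda}{\eta_wG^2}\rfloor,T-t\}$, $S$ is also a $0.2\lambda$-dominant set at $\theta_{t+\sigma'}$.
   Context: $\Theta\subset\mathbb{R}^n$ is compact and convex; $\ell:\Theta\times\mathcal Z\to[0,1]$ is convex and $G$-Lipschitz in its first argument (so its (sub)gradients in $\theta$ have $\ell_2$-norm at most $G$); $\mathcal P_1,\dots,\mathcal P_K$ are distributions on $\mathcal Z$ and $R_i(\theta)=\mathbb E_{z\sim\mathcal P_i}\ell(\theta,z)$. For $\mu\ge0$, a nonempty $S\subseteq[K]$ is $\mu$-dominant at $\theta$ if $\min_{i\in S}R_i(\theta)\ge R_j(\theta)+\mu$ for all $j\in[K]\setminus S$. *)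

(* Defs.v *)
From HB Require Import structures.
From mathcomp Require Import all_boot all_order all_algebra.
From mathcomp Require Import all_classical all_reals all_analysis.
Set Implicit Arguments. Unset Strict Implicit. Unset Printing Implicit Defensive.
Import Order.TTheory GRing.Theory Num.Theory.
Import numFieldNormedType.Exports.
Local Open Scope classical_set_scope.
Local Open Scope ring_scope.

Definition dotv (R : realType) (n : nat) (u v : 'rV[R]_n) : R :=
  \sum_(i < n) u ord0 i * v ord0 i.
Definition norm2sq (R : realType) (n : nat) (u : 'rV[R]_n) : R := dotv u u.
Definition norm2 (R : realType) (n : nat) (u : 'rV[R]_n) : R :=
  Num.sqrt (norm2sq u).

Definition risk (R : realType) (n : nat) (d : measure_display)
  (Z : measurableType d) (l : 'rV[R]_n -> Z -> R) (P : probability Z R)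
  (th : 'rV[R]_n) : R :=
  fine (\int[P]_z (l th z)%:E)%E.

Definition dominant (R : realType) (n : nat) (d : measure_display)
  (Z : measurableType d) (l : 'rV[R]_n -> Z -> R) (K : nat)
  (P : 'I_K -> probability Z R) (mu : R) (S : {set 'I_K}) (th : 'rV[R]_n)
  : Prop :=
  S != finset.set0 /\
  forall i j, i \in S -> j \notin S -> risk l (P j) th + mu <= risk l (P i) th.

(* Main.v *)
Require Import Defs.
From HB Require Import structures.
From mathcomp Require Import all_boot all_order all_algebra.
From mathcomp Require Import all_classical all_reals all_analysis.
From mathcomp Require Import ring lra measurable_realfun.
Import Order.TTheory GRing.Theory Num.Theory.
Import numFieldNormedType.Exports.
Local Open Scope classical_set_scope.
Local Open Scope ring_scope.
Set Implicit Arguments. Unset Strict Implicit.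
Lemma dotvZ (R : realType) n (g v : 'rV[R]_n) a : dotv g (a *: v) = a * dotv g v.
Proof. rewrite /dotv mulr_sumr; apply: eq_bigr => i _; rewrite mxE; ring. Qed.

Lemma norm2sqZ (R : realType) n (v : 'rV[R]_n) a : norm2sq (a *: v) = a^+2 * norm2sq v.
Proof. rewrite /norm2sq /dotv mulr_sumr; apply: eq_bigr => i _; rewrite mxE; ring. Qed.

Lemma norm2sqD (R : realType) n (g v : 'rV[R]_n) e :
  norm2sq (e *: g + v) = e^+2 * norm2sq g + 2 * e * dotv g v + norm2sq v.
Proof.
rewrite /norm2sq /dotv !mulr_sumr -!big_split; apply: eq_bigr => i _ /=.
rewrite !mxE; ring.
Qed.

Lemma norm2sq_ge0 (R : realType) n (v : 'rV[R]_n) : 0 <= norm2sq v.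
Proof. rewrite /norm2sq /dotv; apply: sumr_ge0 => i _; exact: mulr_ge0 _ _ || by rewrite -expr2 sqr_ge0. Qed.

Lemma limit_aux (R : realType) (D E : R) : 0 <= E ->
  (forall a, 0 <= a -> a < 1 -> a * D <= E) -> D <= E.
Proof.
move=> E0 H; rewrite leNgt; apply/negP => DE.
have D0 : 0 < D by apply: le_lt_trans DE.
pose a := (D + E) / (2 * D).
have aD : a * D = (D + E) / 2 by rewrite /a; field; rewrite gt_eqF.
have a0 : 0 <= a by rewrite /a divr_ge0 // ?mulr_ge0; lra.
have a1 : a < 1.
  by rewrite /a ltr_pdivrMr ?mulr_gt0 //; lra.
have := H a a0 a1; rewrite aD; lra.
Qed.

Lemma conv_sub (R : realType) n (x y : 'rV[R]_n) a :
  (a *: y + (1 - a) *: x) - x = a *: (y - x).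
Proof. by rewrite scalerBl scale1r scalerBr addrA addrAC addrK. Qed.
Lemma step_bound (R : realType) n (Th : set 'rV[R]_n) (hconvex : convex_set Th)
  (x y g : 'rV[R]_n) (eta G : R) (heta : 0 < eta) (hG : 0 <= G)
  (Hx : Th x) (Hy : Th y) (hg : norm2 g <= G)
  (hupd : forall th, Th th -> eta * dotv g (y - x) + 2^-1 * norm2sq (y - x)
       <= eta * dotv g (th - x) + 2^-1 * norm2sq (th - x)) :
  norm2 (y - x) <= eta * G.
Proof.
have gG : norm2sq g <= G^+2.
  move: hg; rewrite /norm2 => hg.
  have s0 := sqrtr_ge0 (norm2sq g).
  rewrite -(sqr_sqrtr (norm2sq_ge0 g)); nra.
have D0 := norm2sq_ge0 (y - x).
have key : forall a, 0 <= a -> a < 1 -> a * norm2sq (y - x) <= (eta * G)^+2.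
  move=> a a0 a1.
  have Tha : Th (a *: y + (1 - a) *: x).
    have := hconvex y x (Itv01 a0 (ltW a1)) (mem_set Hy) (mem_set Hx).
    by rewrite inE.
  have := hupd _ Tha; rewrite conv_sub dotvZ norm2sqZ => H1.
  have H2 := norm2sq_ge0 (eta *: g + (y - x)); rewrite norm2sqD in H2.
  have H3 : eta^+2 * norm2sq g <= eta^+2 * G^+2 by rewrite ler_wpM2l // sqr_ge0.
  set D := norm2sq (y - x) in H1 H2 *; set p := dotv g (y - x) in H1 H2.
  have H4 : (1 - a) * (eta * p) <= (1 - a) * (- (1 + a) / 2 * D) by nra.
  have H5 : eta * p <= - (1 + a) / 2 * D by rewrite ler_pM2l in H4; lra.
  nra.
have := limit_aux (sqr_ge0 (eta * G)) key => HD.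
rewrite /norm2 -(ger0_norm (mulr_ge0 (ltW heta) hG)) -sqrtr_sqr.
by rewrite ler_sqrt // sqr_ge0.
Qed.
Lemma int_fin (R : realType) (d : measure_display) (Z : measurableType d)
  (P : probability Z R) (f : Z -> R) (mf : measurable_fun setT f)
  (hf : forall z, 0 <= f z <= 1) :
  (\int[P]_z (f z)%:E)%E \is a fin_num.
Proof.
have h0 : (0 <= \int[P]_z (f z)%:E)%E.
  by apply: integral_ge0 => z _; rewrite lee_fin; case/andP: (hf z).
have h1 : (\int[P]_z (f z)%:E <= 1)%E.
  have -> : (1 = \int[P]_z (cst 1%E z))%E.
    rewrite integral_cst // mul1e; exact/esym/probability_setT.
  apply: ge0_le_integral => //.
  - by move=> z _; rewrite lee_fin; case/andP: (hf z).
  - exact/measurable_EFinP.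
  - by move=> z _; rewrite lee_fin; case/andP: (hf z).
by rewrite ge0_fin_numE // (le_lt_trans h1) // ltry.
Qed.

Lemma risk_le (R : realType) n (d : measure_display) (Z : measurableType d)
  (l : 'rV[R]_n -> Z -> R) (P : probability Z R) x y c
  (hmx : measurable_fun setT (l x)) (hmy : measurable_fun setT (l y))
  (hrx : forall z, 0 <= l x z <= 1) (hry : forall z, 0 <= l y z <= 1)
  (c0 : 0 <= c) (H : forall z, l x z <= l y z + c) :
  risk l P x <= risk l P y + c.
Proof.
rewrite /risk.
have fx := int_fin P hmx hrx; have fy := int_fin P hmy hry.
have E : (\int[P]_z ((l y z)%:E + c%:E) = \int[P]_z (l y z)%:E + c%:E)%E.
  rewrite ge0_integralD //.
  - rewrite integral_cst //; congr (_ + _)%E; rewrite -[RHS]mule1; congr (_ * _)%E; exact: probability_setT.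
  all: try (by move=> z _; rewrite lee_fin; case/andP: (hry z)).
  all: try (exact/measurable_EFinP).
  all: try (by move=> z _; rewrite lee_fin).
have L : (\int[P]_z (l x z)%:E <= \int[P]_z (l y z)%:E + c%:E)%E.
  rewrite -E; apply: ge0_le_integral => //.
  all: try (by move=> z _; rewrite lee_fin; case/andP: (hrx z)).
  all: try (exact/measurable_EFinP).
  all: try (by move=> z _; rewrite adde_ge0 // lee_fin; case/andP: (hry z)).
  all: try (by apply: emeasurable_funD => //; exact/measurable_EFinP).
  all: try (by move=> z _; rewrite -EFinD lee_fin).

rewrite -(fineK fy) -EFinD /= in L.
by rewrite -lee_fin fineK.
Qed.
Unset Implicit Arguments. Set Strict Implicit.

Theorem lemmaC3 (R : realType) (n : nat) (Th : set 'rV[R]_n)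
  (d : measure_display) (Z : measurableType d) (l : 'rV[R]_n -> Z -> R)
  (G : R) (K : nat) (P : 'I_K -> probability Z R)
  (hcompact : compact Th) (hconvex : convex_set Th)
  (hG : 0 < G)
  (hmeas : forall th, Th th -> measurable_fun setT (l th))
  (hrange : forall th z, Th th -> 0 <= l th z <= 1)
  (hlconv : forall z x y, Th x -> Th y -> forall a : R, 0 <= a <= 1 ->
     l (a *: x + (1 - a) *: y) z <= a * l x z + (1 - a) * l y z)
  (hlip : forall z x y, Th x -> Th y -> `|l x z - l y z| <= G * norm2 (x - y))
  (eta lambda : R) (heta : 0 < eta) (hlam : 0 <= lambda <= 1)
  (T : nat) (theta : nat -> 'rV[R]_n) (zs : nat -> Z) (g : nat -> 'rV[R]_n)
  (htheta : forall t, (1 <= t <= T)%N -> Th (theta t))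
  (hsubgrad : forall t, (1 <= t < T)%N ->
     (forall th, Th th -> l (theta t) (zs t) + dotv (g t) (th - theta t) <= l th (zs t))
     /\ norm2 (g t) <= G)
  (hupdate : forall t, (1 <= t < T)%N ->
     forall th, Th th ->
       eta * dotv (g t) (theta t.+1 - theta t) + 2^-1 * norm2sq (theta t.+1 - theta t)
       <= eta * dotv (g t) (th - theta t) + 2^-1 * norm2sq (th - theta t))
  (S : {set 'I_K}) (t : nat) (ht : (1 <= t <= T)%N)
  (hdom : dominant l P (4/10 * lambda) S (theta t))
  (sigma : nat)
  (hsig1 : (sigma%:Z <= Num.floor (1/10 * lambda / (eta * G ^+ 2)))%R)
  (hsig2 : (sigma <= T - t)%N) :
  dominant l P (2/10 * lambda) S (theta (t + sigma)%N).
Proof.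
set c := eta * G ^+ 2.
have c0 : 0 < c by rewrite /c mulr_gt0 // exprn_gt0.
have step : forall s, (1 <= s < T)%N -> forall i,
    `|risk l (P i) (theta s.+1) - risk l (P i) (theta s)| <= c.
  move=> s /andP[s1 sT] i.
  have Ths : Th (theta s) by apply: htheta; rewrite s1 ltnW.
  have Ths1 : Th (theta s.+1) by apply: htheta; rewrite sT andbT.
  have nb : norm2 (theta s.+1 - theta s) <= eta * G.
    have := step_bound (g:=g s) hconvex heta (ltW hG) Ths Ths1. move=> HH; apply: HH.
      by case: (hsubgrad s); rewrite ?s1 ?sT.
    by apply: hupdate; rewrite s1 sT.
  have pw : forall z, `|l (theta s.+1) z - l (theta s) z| <= c.
    move=> z; apply: le_trans (hlip z _ _ Ths1 Ths) _.
    by rewrite /c expr2 mulrCA ler_wpM2l // ltW.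
  rewrite ler_norml; apply/andP; split.
  - suff : risk l (P i) (theta s) <= risk l (P i) (theta s.+1) + c by lra.
    apply: risk_le; [exact: hmeas|exact: hmeas|by move=> z; exact: hrange|by move=> z; exact: hrange|exact: ltW|move=> z].
    by have := pw z; rewrite ler_norml => /andP[H1 _]; lra.
  - suff : risk l (P i) (theta s.+1) <= risk l (P i) (theta s) + c by lra.
    apply: risk_le; [exact: hmeas|exact: hmeas|by move=> z; exact: hrange|by move=> z; exact: hrange|exact: ltW|move=> z].
    by have := pw z; rewrite ler_norml => /andP[_ H1]; lra.
have acc : forall k, (k <= sigma)%N -> forall i,
    `|risk l (P i) (theta (t + k)%N) - risk l (P i) (theta t)| <= k%:R * c.
  elim=> [|k IH] kS i.
    by rewrite addn0 subrr normr0 mul0r.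
  have hs : (1 <= t + k < T)%N.
    apply/andP; split; first by apply: leq_trans (leq_addr _ _); case/andP: ht.
    move: kS hsig2; case/andP: ht => _ tT.
    move=> kS hs2; rewrite -(subnKC tT) ltn_add2l; exact: leq_trans kS hs2.
  have := step _ hs i; rewrite addnS.
  have := IH (ltnW kS) i.
  set a := risk l (P i) (theta (t + k)%N); set b := risk l (P i) (theta (t + k).+1).
  set r := risk l (P i) (theta t).
  rewrite -natr1 mulrDl mul1r => H1 H2.
  rewrite (_ : b - r = (b - a) + (a - r)); last by rewrite addrA subrK.
  apply: le_trans (ler_normD _ _) _; lra.
have sc : sigma%:R * c <= 1/10 * lambda.
  have Hs : (sigma%:Z)%:~R <= 1/10 * lambda / c.
    apply: le_trans (floor_le _); by rewrite ler_int.
  by rewrite -ler_pdivlMr.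
have fin := acc sigma (leqnn _).
case: hdom => Sne hd; split => // i j iS jS.
have := hd i j iS jS.
have := fin i; have := fin j; rewrite !ler_norml.
move=> /andP[Hj1 Hj2] /andP[Hi1 Hi2] H.
lra.
Qed.
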